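(* Let $c>0$, $\varepsilon>0$, $\Delta t,\Delta x>0$, $0\le a_\infty$, and for each $n$ and $j\in\mathbb{Z}$ let $a_{j-\frac12,L}^n, a_{j-\frac12,R}^n \in [-a_\infty, a_\infty]$ be given. Define $$\kappa_{j-\frac12,L}^n = \frac{a_{j-\frac12,L}^n}{1 - \exp\!\big(-a_{j-\frac12,L}^n \Delta x/(\varepsilon c^2)\big)}, \qquad \kappa_{j-\frac12,R}^n = \frac{a_{j-\frac12,R}^n}{1 - \exp\!\big(a_{j-\frac12,R}^n \Delta x/(\varepsilon c^2)\big)}$$ (extended by continuity at $0$), write $D_{j\pm\frac12}^n = c - \kappa_{j\pm\frac12,R}^n + \kappa_{j\pm\frac12,L}^n$ and $\lambda = \frac{c\Delta t}{\Delta x}$, and consider the well-balanced scheme $$\mu_j^{n+1} = (1-\lambda)\mu_j^n - \lambda\frac{c - \kappa_{j+\frac12,R}^n - \kappa_{j+\frac12,L}^n}{D_{j+\frac12}^n}\nu_j^n - 2\lambda\frac{\kappa_{j+\frac12,R}^n}{D_{j+\frac12}^n}\mu_{j+1}^n,$$ $$\nu_j^{n+1} = (1-\lambda)\nu_j^n - \lambda\frac{c + \kappa_{j-\frac12,R}^n + \kappa_{j-\frac12,L}^n}{D_{j-\frac12}^n}\mu_j^n + 2\lambda\frac{\kappa_{j-\frac12,L}^n}{D_{j-\frac12}^n}\nu_{j-1}^n.$$ Under the CFL condition $\frac{c\Delta t}{\Delta x} \le 1$ and the subcharacteristic condition $c \ge a_\infty$, for every $n\in\mathbb{N}$ (with $(\mu^n,\nu^n)\in\ell^1(\mathbb{Z})^2$)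 $$\sum_{j\in\mathbb{Z}}\big(|\mu_j^{n+1}| + |\nu_j^{n+1}|\big) \leq \sum_{j\in\mathbb{Z}}\big(|\mu_j^{n}| + |\nu_j^{n}|\big).$$
   Context: The unknowns are $\mu_j^n = \sigma_j^n - c\rho_j^n$, $\nu_j^n = \sigma_j^n + c\rho_j^n$, approximations of the relaxation system $\partial_t\rho + \partial_x\sigma = 0$, $\partial_t\sigma + c^2\partial_x\rho = \frac1\varepsilon(a[\rho]\rho - \sigma)$ on the grid $x_j = j\Delta x$, $t^n = n\Delta t$. In the paper the interface velocities $a_{j-\frac12,L/R}^n$ are computed by a fixed-point procedure from an $a_\infty$-Lipschitz interaction potential, which guarantees $|a_{j-\frac12,L/R}^n|\le a_\infty$. *)

(* Defs.v *)
From Stdlib Require Import Reals ZArith.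
From Coquelicot Require Import Coquelicot.
Open Scope R_scope.

(* kappa_L(a) = a / (1 - exp(-a dx/(eps c^2))), extended by continuity at 0
   (limit eps c^2 / dx). *)
Definition kappaL (eps c dx a : R) : R :=
  if Req_EM_T a 0 then eps * c ^ 2 / dx
  else a / (1 - exp (- (a * dx) / (eps * c ^ 2))).

(* kappa_R(a) = a / (1 - exp(a dx/(eps c^2))), extended by continuity at 0
   (limit - eps c^2 / dx). *)
Definition kappaR (eps c dx a : R) : R :=
  if Req_EM_T a 0 then - (eps * c ^ 2 / dx)
  else a / (1 - exp ((a * dx) / (eps * c ^ 2))).

(* Absolute summability of f : Z -> R (membership in l^1(Z)),
   split into j >= 0 and j <= -1. *)
Definition summableZ (f : Z -> R) : Prop :=
  ex_series (fun k : nat => Rabs (f (Z.of_nat k))) /\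
  ex_series (fun k : nat => Rabs (f (- Z.of_nat (S k))%Z)).

Definition sumZ (f : Z -> R) : R :=
  Series (fun k : nat => f (Z.of_nat k)) +
  Series (fun k : nat => f (- Z.of_nat (S k))%Z).

(* Main.v *)
Require Import Defs.
From Stdlib Require Import Reals ZArith.
From Coquelicot Require Import Coquelicot.
From Stdlib Require Import Lra Lia Psatz FunctionalExtensionality.
Open Scope R_scope.


Lemma exs_plus (a b : nat -> R) : ex_series a -> ex_series b ->
  ex_series (fun n => a n + b n).
Proof. intros; now apply (ex_series_plus a b). Qed.

Lemma Series_le_gen (a b : nat -> R) : (forall n, a n <= b n) ->
  ex_series a -> ex_series b -> Series a <= Series b.
Proof.
  intros H Ha Hb.
  assert (0 <= Series (fun n => b n - a n)).
  { assert (Z0 : Series (fun _ : nat => 0) = 0).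
    { replace (fun _:nat => 0) with (fun n:nat => 0 * 0) by (apply functional_extensionality; intros; ring).
      rewrite Series_scal_l; ring. }
    rewrite <- Z0. apply Series_le. intros n; specialize (H n); lra.
    apply (ex_series_minus b a); auto. }
  rewrite Series_minus in H0; auto. lra.
Qed.

Lemma summable_le (f g : Z -> R) : (forall j, Rabs (g j) <= Rabs (f j)) ->
  summableZ f -> summableZ g.
Proof.
  intros H [H1 H2]; split.
    apply (@ex_series_le R_AbsRing R_CompleteNormedModule (fun k => Rabs (g (Z.of_nat k))) (fun k => Rabs (f (Z.of_nat k)))); auto.
    intros k; change norm with Rabs; simpl; rewrite Rabs_Rabsolu; auto.
  - apply (@ex_series_le R_AbsRing R_CompleteNormedModule (fun k => Rabs (g (- Z.of_nat (S k))%Z)) (fun k => Rabs (f (- Z.of_nat (S k))%Z))); auto.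
    intros k; change norm with Rabs; simpl; rewrite Rabs_Rabsolu; auto.
Qed.

Lemma summable_plus (f g : Z -> R) : summableZ f -> summableZ g ->
  summableZ (fun j => f j + g j) /\ sumZ (fun j => f j + g j) = sumZ f + sumZ g.
Proof.
  intros [F1 F2] [G1 G2]. split; [split|].
  - apply (@ex_series_le R_AbsRing R_CompleteNormedModule (fun k => Rabs (f (Z.of_nat k) + g (Z.of_nat k))) (fun k => Rabs (f (Z.of_nat k)) + Rabs (g (Z.of_nat k)))).
    intros k; change norm with Rabs; simpl; rewrite Rabs_Rabsolu; apply Rabs_triang.
    now apply exs_plus.
  - apply (@ex_series_le R_AbsRing R_CompleteNormedModule (fun k => Rabs (f (- Z.of_nat (S k))%Z + g (- Z.of_nat (S k))%Z)) (fun k => Rabs (f (- Z.of_nat (S k))%Z) + Rabs (g (- Z.of_nat (S k))%Z))).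
    intros k; change norm with Rabs; simpl; rewrite Rabs_Rabsolu; apply Rabs_triang.
    now apply exs_plus.
  - unfold sumZ. rewrite !Series_plus; try apply ex_series_Rabs; auto. ring.
Qed.

Lemma sumZ_le (f g : Z -> R) : (forall j, f j <= g j) -> summableZ f -> summableZ g ->
  sumZ f <= sumZ g.
Proof.
  intros H [F1 F2] [G1 G2]. unfold sumZ.
  apply Rplus_le_compat; apply Series_le_gen; auto; apply ex_series_Rabs; auto.
Qed.

Lemma shift_summable (f : Z -> R) :
  summableZ f <-> summableZ (fun j => f (j + 1)%Z).
Proof.
  unfold summableZ.
  assert (E1 : (fun k => Rabs (f (Z.of_nat k + 1)%Z)) = (fun k => Rabs (f (Z.of_nat (S k))))).
  { apply functional_extensionality; intros k; f_equal; f_equal; lia. }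
  assert (E2 : (fun k : nat => Rabs (f (- Z.of_nat (S (S k)) + 1)%Z)) = (fun k => Rabs (f (- Z.of_nat (S k))%Z))).
  { apply functional_extensionality; intros k; f_equal; f_equal; lia. }
  rewrite E1.
  rewrite (ex_series_incr_1 (fun k => Rabs (f (- Z.of_nat (S k) + 1)%Z))).
  rewrite E2.
  rewrite <- (ex_series_incr_1 (fun k => Rabs (f (Z.of_nat k)))). tauto.
Qed.

Lemma shift_sum (f : Z -> R) : summableZ f ->
  sumZ (fun j => f (j + 1)%Z) = sumZ f.
Proof.
  intros Hf. pose proof Hf as Hg. apply shift_summable in Hg.
  destruct Hf as [F1 F2]. destruct Hg as [G1 G2].
  apply ex_series_Rabs in F1, F2, G1, G2.
  unfold sumZ.
  rewrite (Series_incr_1 (fun k => f (Z.of_nat k))) by auto.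
  rewrite (Series_incr_1 (fun k => f (- Z.of_nat (S k) + 1)%Z)) by auto.
  assert (E1 : (fun k => (f (Z.of_nat k + 1)%Z)) = (fun k => (f (Z.of_nat (S k))))).
  { apply functional_extensionality; intros k; f_equal; lia. }
  assert (E2 : (fun k : nat => (f (- Z.of_nat (S (S k)) + 1)%Z)) = (fun k => (f (- Z.of_nat (S k))%Z))).
  { apply functional_extensionality; intros k; f_equal; lia. }
  rewrite E1, E2. replace (- Z.of_nat 1 + 1)%Z with (Z.of_nat 0) by lia. ring.
Qed.

Lemma exp_convex0 (t u : R) : 0 <= t <= 1 -> exp (t * u) <= t * exp u + (1 - t).
Proof.
  intros Ht. set (z := t * u).
  assert (E1 : exp u = exp z * exp (u - z)) by (rewrite <- exp_plus; f_equal; ring).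
  assert (E2 : 1 = exp z * exp (- z)) by (rewrite <- exp_plus, <- exp_0; f_equal; ring).
  pose proof (exp_ineq1_le (u - z)). pose proof (exp_ineq1_le (- z)).
  pose proof (exp_pos z).
  assert (H4 : t * (1 + (u - z)) + (1 - t) * (1 + - z) = 1) by (unfold z; ring).
  assert (0 <= t * exp z * (exp (u - z) - (1 + (u - z)))) by (apply Rmult_le_pos; [apply Rmult_le_pos|]; lra).
  assert (0 <= (1 - t) * exp z * (exp (- z) - (1 + - z))) by (apply Rmult_le_pos; [apply Rmult_le_pos|]; lra).
  assert (exp z = exp z * (t * (1 + (u - z)) + (1 - t) * (1 + - z))) by (rewrite H4; ring).
  assert (t * exp u + (1 - t) = t * (exp z * exp (u - z)) + (1 - t) * (exp z * exp (- z))) by (rewrite <- E1, <- E2; ring).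
  rewrite H6. nra.
Qed.

Lemma Kpos (x y : R) : 0 < x < y -> x - x * exp (- y) <= y - y * exp (- x).
Proof.
  intros H. pose proof (exp_convex0 (x / y) (- y)).
  replace (x / y * - y) with (- x) in H0 by (field; lra).
  assert (0 <= x / y <= 1).
  { split. apply Rlt_le, Rdiv_lt_0_compat; lra.
    apply (Rmult_le_reg_r y); [lra|]. field_simplify; lra. }
  specialize (H0 H1).
  apply (Rmult_le_compat_l y) in H0; [|lra].
  replace (y * (x / y * exp (- y) + (1 - x / y))) with (x * exp (-y) + y - x) in H0 by (field; lra).
  lra.
Qed.

Lemma Kneg (x y : R) : x < y < 0 -> x - x * exp (- y) <= y - y * exp (- x).
Proof.
  intros H. pose proof (exp_convex0 (y / x) (- x)).
  replace (y / x * - x) with (- y) in H0 by (field; lra).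
  assert (0 <= y / x <= 1).
  { split. replace (y/x) with ((-y)/(-x)) by (field; lra).
    apply Rlt_le, Rdiv_lt_0_compat; lra.
    replace (y/x) with ((-y)/(-x)) by (field; lra).
    apply (Rmult_le_reg_r (-x)); [lra|]. field_simplify; lra. }
  specialize (H0 H1).
  apply (Rmult_le_compat_l (-x)) in H0; [|lra].
  replace (-x * (y / x * exp (- x) + (1 - y / x))) with (- y * exp (-x) - x + y) in H0 by (field; lra).
  lra.
Qed.

Lemma exp_gt1 (x : R) : 0 < x -> 1 < exp x.
Proof. intros; rewrite <- exp_0; apply exp_increasing; auto. Qed.
Lemma exp_lt1 (x : R) : x < 0 -> exp x < 1.
Proof. intros; rewrite <- exp_0; apply exp_increasing; auto. Qed.

Lemma mdiv_neg a d e : a < 0 -> 0 < d -> 0 < e -> a * d / e < 0.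
Proof. intros. unfold Rdiv. assert (a * d < 0) by nra. assert (0 < / e) by (apply Rinv_0_lt_compat; lra). nra. Qed.
Lemma mdiv_pos a d e : 0 < a -> 0 < d -> 0 < e -> 0 < a * d / e.
Proof. intros. unfold Rdiv. assert (0 < a * d) by nra. assert (0 < / e) by (apply Rinv_0_lt_compat; lra). nra. Qed.
Lemma mdiv_lt a b d e : a < b -> 0 < d -> 0 < e -> a * d / e < b * d / e.
Proof. intros. unfold Rdiv. apply Rmult_lt_compat_r. apply Rinv_0_lt_compat; lra. apply Rmult_lt_compat_r; lra. Qed.

Lemma mdiv_nz a d e : a <> 0 -> 0 < d -> 0 < e -> a * d / e <> 0.
Proof. intros. destruct (Rlt_or_le a 0). pose proof (mdiv_neg a d e); lra. pose proof (mdiv_pos a d e); lra. Qed.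

Section K.
Variables (eps c dx : R).
Hypotheses (Heps : 0 < eps) (Hc : 0 < c) (Hdx : 0 < dx).

Definition E := eps * c ^ 2.
Lemma E_pos : 0 < E. Proof. unfold E; apply Rmult_lt_0_compat; [lra| apply pow_lt; lra]. Qed.

Lemma kL_nz (a : R) : a <> 0 -> kappaL eps c dx a = a / (1 - exp (- (a * dx / E))).
Proof.
  intros Ha; unfold kappaL; destruct (Req_EM_T a 0); [contradiction|].
  fold E. f_equal. f_equal. f_equal. unfold Rdiv; ring.
Qed.

Lemma kL_0 : kappaL eps c dx 0 = E / dx.
Proof. unfold kappaL; destruct (Req_EM_T 0 0); [reflexivity|contradiction]. Qed.

Lemma kL_pos (a : R) : 0 < kappaL eps c dx a.
Proof.
  pose proof E_pos.
  destruct (Req_dec a 0) as [->|Ha].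
  - rewrite kL_0. apply Rdiv_lt_0_compat; lra.
  - rewrite kL_nz by auto. destruct (Rlt_or_le a 0).
    + assert (a * dx / E < 0) by (apply mdiv_neg; lra).
      pose proof (exp_gt1 (- (a * dx / E))). 
      replace (a / (1 - exp (- (a * dx / E)))) with ((-a) / (exp (- (a * dx / E)) - 1)) by (field; lra).
      apply Rdiv_lt_0_compat; lra.
    + assert (0 < a * dx / E) by (apply mdiv_pos; lra).
      pose proof (exp_lt1 (- (a * dx / E))). apply Rdiv_lt_0_compat; lra.
Qed.

Lemma kR_eq (a : R) : kappaR eps c dx a = - kappaL eps c dx (- a).
Proof.
  pose proof E_pos.
  destruct (Req_dec a 0) as [->|Ha].
  - unfold kappaR; destruct (Req_EM_T 0 0); [|contradiction].
    rewrite Ropp_0, kL_0. reflexivity.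
  - rewrite kL_nz by lra. unfold kappaR; destruct (Req_EM_T a 0); [contradiction|].
    fold E. replace (- (- a * dx / E)) with (a * dx / E) by (unfold Rdiv; ring).
    assert (a * dx / E <> 0) by (apply mdiv_nz; lra).
    assert (exp (a * dx / E) <> 1). { intro. rewrite <- exp_0 in H1. apply exp_inv in H1. auto. }
    field. lra.
Qed.

Lemma kL_diff (a : R) : kappaL eps c dx a - kappaL eps c dx (- a) = a.
Proof.
  pose proof E_pos.
  destruct (Req_dec a 0) as [->|Ha].
  - rewrite Ropp_0; ring.
  - rewrite !kL_nz by lra.
    replace (- (- a * dx / E)) with (a * dx / E) by (unfold Rdiv; ring).
    set (x := a * dx / E).
    assert (x <> 0) by (apply mdiv_nz; lra).
    assert (exp x <> 1). { intro. rewrite <- exp_0 in H1. apply exp_inv in H1. auto. }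
    rewrite exp_Ropp. pose proof (exp_pos x).
    assert (1 - / exp x <> 0).
    { intro. apply H1. assert (/ exp x = 1) by lra.
      apply (f_equal Rinv) in H4; rewrite Rinv_inv, Rinv_1 in H4; exact H4. }
    field. split; lra.
Qed.

Lemma kL_le_0 (a : R) : a <= 0 -> kappaL eps c dx a <= E / dx.
Proof.
  pose proof E_pos. intros Ha.
  destruct (Req_dec a 0) as [->|Ha'].
  - rewrite kL_0; lra.
  - rewrite kL_nz by auto.
    set (x := a * dx / E).
    assert (x < 0) by (apply mdiv_neg; lra).
    pose proof (exp_gt1 (- x)). pose proof (exp_ineq1_le (- x)).
    assert (a = x * E / dx) by (unfold x; field; lra).
    set (d := 1 - exp (- x)) in *.
    assert (d < 0) by (unfold d; lra).
    replace (a / d) with (x / d * (E / dx)) by (rewrite H3; field; lra).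
    assert (x / d <= 1).
    { replace (x / d) with ((-x) / (-d)) by (field; lra).
      apply (Rmult_le_reg_r (-d)); [lra|]. field_simplify; [unfold d in *; lra | lra]. }
    assert (0 < E / dx) by (apply Rdiv_lt_0_compat; lra).
    nra.
Qed.

Lemma kL_ge_0 (a : R) : 0 <= a -> E / dx <= kappaL eps c dx a.
Proof.
  pose proof E_pos. intros Ha.
  destruct (Req_dec a 0) as [->|Ha'].
  - rewrite kL_0; lra.
  - rewrite kL_nz by auto.
    set (x := a * dx / E).
    assert (0 < x) by (apply mdiv_pos; lra).
    pose proof (exp_lt1 (- x)). pose proof (exp_ineq1_le (- x)).
    assert (a = x * E / dx) by (unfold x; field; lra).
    set (d := 1 - exp (- x)) in *.
    assert (0 < d) by (unfold d; lra).
    replace (a / d) with (x / d * (E / dx)) by (rewrite H3; field; lra).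
    assert (1 <= x / d).
    { apply (Rmult_le_reg_r d); [lra|]. field_simplify; [unfold d in *; lra | lra]. }
    assert (0 < E / dx) by (apply Rdiv_lt_0_compat; lra).
    nra.
Qed.

Lemma kL_mono (a b : R) : a <= b -> kappaL eps c dx a <= kappaL eps c dx b.
Proof.
  pose proof E_pos. intros Hab.
  destruct (Rle_or_lt a 0) as [Ha|Ha]; destruct (Rle_or_lt b 0) as [Hb|Hb].
  - destruct (Req_dec b 0) as [->|Hb']. 
    + pose proof (kL_le_0 a Ha). pose proof (kL_ge_0 0 (Rle_refl 0)). lra.
    + destruct (Req_dec a b) as [->|Hab']; [lra|].
      rewrite !kL_nz by lra.
      set (x := a * dx / E). set (y := b * dx / E).
      assert (x < y < 0) by (split; [apply mdiv_lt|apply mdiv_neg]; lra).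
      pose proof (Kneg x y H0).
      pose proof (exp_gt1 (- x)). pose proof (exp_gt1 (- y)).
      assert (a = x * E / dx) by (unfold x; field; lra).
      assert (b = y * E / dx) by (unfold y; field; lra).
      rewrite H4, H5.
      set (dxx := 1 - exp (- x)) in *. set (dy := 1 - exp (- y)) in *.
      assert (0 < E / dx) by (apply Rdiv_lt_0_compat; lra).
      replace (x * E / dx / dxx) with (x / dxx * (E / dx)) by (field; unfold dxx; lra).
      replace (y * E / dx / dy) with (y / dy * (E / dx)) by (field; unfold dy; lra).
      apply Rmult_le_compat_r; [lra|].
      set (p := x / dxx). set (q := y / dy).
      assert (x = p * dxx) by (unfold p; field; unfold dxx; lra).
      assert (y = q * dy) by (unfold q; field; unfold dy; lra).
      assert (x * dy <= y * dxx) by (unfold dy, dxx; lra).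
      assert (0 < dxx * dy) by (unfold dxx, dy; nra).
      rewrite H7, H8 in H9. nra.
  - pose proof (kL_le_0 a Ha). pose proof (kL_ge_0 b (Rlt_le _ _ Hb)). lra.
  - lra.
  - rewrite !kL_nz by lra.
    set (x := a * dx / E). set (y := b * dx / E).
    destruct (Req_dec a b) as [->|Hab']; [apply Rle_refl|].
    assert (0 < x < y) by (split; [apply mdiv_pos|apply mdiv_lt]; lra).
    pose proof (Kpos x y H0).
    pose proof (exp_lt1 (- x)). pose proof (exp_lt1 (- y)).
    assert (a = x * E / dx) by (unfold x; field; lra).
    assert (b = y * E / dx) by (unfold y; field; lra).
    rewrite H4, H5.
    set (dxx := 1 - exp (- x)) in *. set (dy := 1 - exp (- y)) in *.
    assert (0 < E / dx) by (apply Rdiv_lt_0_compat; lra).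
    replace (x * E / dx / dxx) with (x / dxx * (E / dx)) by (field; unfold dxx; lra).
    replace (y * E / dx / dy) with (y / dy * (E / dx)) by (field; unfold dy; lra).
    apply Rmult_le_compat_r; [lra|].
    set (p := x / dxx). set (q := y / dy).
    assert (x = p * dxx) by (unfold p; field; unfold dxx; lra).
    assert (y = q * dy) by (unfold q; field; unfold dy; lra).
    assert (x * dy <= y * dxx) by (unfold dy, dxx; lra).
    assert (0 < dxx * dy) by (unfold dxx, dy; nra).
    rewrite H7, H8 in H9. nra.
Qed.

End K.

Lemma tri3 p q r x y z : 0 <= p -> 0 <= q -> 0 <= r ->
  Rabs (p * x + q * y + r * z) <= p * Rabs x + q * Rabs y + r * Rabs z.
Proof.
  intros. eapply Rle_trans. apply Rabs_triang. eapply Rle_trans.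
  apply Rplus_le_compat_r. apply Rabs_triang.
  rewrite !Rabs_mult, !(Rabs_pos_eq p), (Rabs_pos_eq q), (Rabs_pos_eq r) by auto. lra.
Qed.

Lemma coef lam c kL kR : 0 < lam <= 1 -> 0 < c -> 0 < kL -> kR < 0 -> -c <= kL + kR <= c ->
  let D := c - kR + kL in
  0 < D /\ 0 <= (c - kR - kL) / D /\ 0 <= -2 * kR / D /\ 0 <= (c + kR + kL) / D /\ 0 <= 2 * kL / D /\
  (c - kR - kL) / D + 2 * kL / D = 1 /\ -2 * kR / D + (c + kR + kL) / D = 1 /\
  (forall x y z, Rabs ((1 - lam) * x - lam * ((c - kR - kL) / D) * y - 2 * lam * (kR / D) * z)
     <= (1 - lam) * Rabs x + lam * ((c - kR - kL) / D) * Rabs y + lam * (-2 * kR / D) * Rabs z) /\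
  (forall x y z, Rabs ((1 - lam) * x - lam * ((c + kR + kL) / D) * y + 2 * lam * (kL / D) * z)
     <= (1 - lam) * Rabs x + lam * ((c + kR + kL) / D) * Rabs y + lam * (2 * kL / D) * Rabs z).
Proof.
  intros Hl Hc HL HR Hs D.
  assert (HD : 0 < D) by (unfold D; lra).
  assert (P1 : 0 <= (c - kR - kL) / D) by (apply Rmult_le_pos; [lra| left; apply Rinv_0_lt_compat; lra]).
  assert (P2 : 0 <= -2 * kR / D) by (apply Rmult_le_pos; [lra| left; apply Rinv_0_lt_compat; lra]).
  assert (P3 : 0 <= (c + kR + kL) / D) by (apply Rmult_le_pos; [lra| left; apply Rinv_0_lt_compat; lra]).
  assert (P4 : 0 <= 2 * kL / D) by (apply Rmult_le_pos; [lra| left; apply Rinv_0_lt_compat; lra]).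
  repeat split; auto.
  - unfold D; field; unfold D in HD; lra.
  - unfold D; field; unfold D in HD; lra.
  - intros x y z.
    replace ((1 - lam) * x - lam * ((c - kR - kL) / D) * y - 2 * lam * (kR / D) * z)
      with ((1 - lam) * x + (lam * ((c - kR - kL) / D)) * (- y) + (lam * (-2 * kR / D)) * z)
      by (field; lra).
    rewrite <- (Rabs_Ropp y). apply tri3; try apply Rmult_le_pos; lra.
  - intros x y z.
    replace ((1 - lam) * x - lam * ((c + kR + kL) / D) * y + 2 * lam * (kL / D) * z)
      with ((1 - lam) * x + (lam * ((c + kR + kL) / D)) * (- y) + (lam * (2 * kL / D)) * z)
      by (field; lra).
    rewrite <- (Rabs_Ropp y). apply tri3; try apply Rmult_le_pos; lra.
Qed.

Lemma kappa_facts eps c dx ainf aL aR : 0 < eps -> 0 < c -> 0 < dx -> ainf <= c ->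
  - ainf <= aL <= ainf -> - ainf <= aR <= ainf ->
  0 < kappaL eps c dx aL /\ kappaR eps c dx aR < 0 /\
  - c <= kappaL eps c dx aL + kappaR eps c dx aR <= c.
Proof.
  intros He Hc Hd Hac HL HR. rewrite kR_eq by auto.
  pose proof (kL_pos eps c dx He Hc Hd aL).
  pose proof (kL_pos eps c dx He Hc Hd (- aR)).
  pose proof (kL_diff eps c dx He Hc Hd ainf).
  pose proof (kL_mono eps c dx He Hc Hd aL ainf ltac:(lra)).
  pose proof (kL_mono eps c dx He Hc Hd (- ainf) aL ltac:(lra)).
  pose proof (kL_mono eps c dx He Hc Hd (- aR) ainf ltac:(lra)).
  pose proof (kL_mono eps c dx He Hc Hd (- ainf) (- aR) ltac:(lra)).
  repeat split; lra.
Qed.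

Theorem lemma3 (c eps dt dx ainf : R) (aL aR : nat -> Z -> R)
  (mu nu : nat -> Z -> R) :
  0 < c -> 0 < eps -> 0 < dt -> 0 < dx -> 0 <= ainf ->
  (forall n j, - ainf <= aL n j <= ainf) ->
  (forall n j, - ainf <= aR n j <= ainf) ->
  c * dt / dx <= 1 ->
  ainf <= c ->
  (forall n j,
     let lam := c * dt / dx in
     let kR := kappaR eps c dx (aR n (j + 1)%Z) in
     let kL := kappaL eps c dx (aL n (j + 1)%Z) in
     let D := c - kR + kL in
     mu (S n) j = (1 - lam) * mu n j - lam * ((c - kR - kL) / D) * nu n j
                  - 2 * lam * (kR / D) * mu n (j + 1)%Z) ->
  (forall n j,
     let lam := c * dt / dx in
     let kR := kappaR eps c dx (aR n j) in
     let kL := kappaL eps c dx (aL n j) in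
     let D := c - kR + kL in
     nu (S n) j = (1 - lam) * nu n j - lam * ((c + kR + kL) / D) * mu n j
                  + 2 * lam * (kL / D) * nu n (j - 1)%Z) ->
  forall n : nat,
    summableZ (mu n) -> summableZ (nu n) ->
    summableZ (mu (S n)) /\ summableZ (nu (S n)) /\
    sumZ (fun j => Rabs (mu (S n) j) + Rabs (nu (S n) j))
      <= sumZ (fun j => Rabs (mu n j) + Rabs (nu n j)).
Proof.
  intros Hc He Hdt Hdx Ha HaL HaR Hcfl Hac Hmu Hnu n Smu Snu.
  assert (Hlam : 0 < c * dt / dx <= 1).
  { split; auto. apply Rdiv_lt_0_compat; [apply Rmult_lt_0_compat|]; lra. }
  set (lam := c * dt / dx) in *.
  pose (kLf := fun j => kappaL eps c dx (aL n j)).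
  pose (kRf := fun j => kappaR eps c dx (aR n j)).
  pose (Df := fun j => c - kRf j + kLf j).
  pose (al := fun j => (c - kRf j - kLf j) / Df j).
  pose (Bt := fun j => -2 * kRf j / Df j).
  pose (Gm := fun j => (c + kRf j + kLf j) / Df j).
  pose (Dl := fun j => 2 * kLf j / Df j).
  assert (CF : forall j, 0 <= al j /\ 0 <= Bt j /\ 0 <= Gm j /\ 0 <= Dl j /\
     al j + Dl j = 1 /\ Bt j + Gm j = 1).
  { intros j. destruct (kappa_facts eps c dx ainf (aL n j) (aR n j) He Hc Hdx Hac (HaL n j) (HaR n j))
      as [K1 [K2 K3]].
    destruct (coef lam c (kLf j) (kRf j) Hlam Hc K1 K2 K3) as [_ [C1 [C2 [C3 [C4 [C5 [C6 _]]]]]]].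
    unfold al, Bt, Gm, Dl, Df. repeat split; auto. }
  pose (M := fun j => Rabs (mu n j)). pose (N := fun j => Rabs (nu n j)).
  assert (B1 : forall j, Rabs (mu (S n) j) <= (1 - lam) * M j + lam * al (j+1)%Z * N j + lam * Bt (j+1)%Z * M (j+1)%Z).
  { intros j. rewrite (Hmu n j). cbv zeta.
    destruct (kappa_facts eps c dx ainf (aL n (j+1)%Z) (aR n (j+1)%Z) He Hc Hdx Hac (HaL n _) (HaR n _))
      as [K1 [K2 K3]].
    destruct (coef lam c _ _ Hlam Hc K1 K2 K3) as [_ [_ [_ [_ [_ [_ [_ [C _]]]]]]]].
    eapply Rle_trans. apply C. unfold M, N, al, Bt, Df, kLf, kRf. lra. }
  assert (B2 : forall j, Rabs (nu (S n) j) <= (1 - lam) * N j + lam * Gm j * M j + lam * Dl j * N (j-1)%Z).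
  { intros j. rewrite (Hnu n j). cbv zeta.
    destruct (kappa_facts eps c dx ainf (aL n j) (aR n j) He Hc Hdx Hac (HaL n _) (HaR n _))
      as [K1 [K2 K3]].
    destruct (coef lam c _ _ Hlam Hc K1 K2 K3) as [_ [_ [_ [_ [_ [_ [_ [_ C]]]]]]]].
    eapply Rle_trans. apply C. unfold M, N, Gm, Dl, Df, kLf, kRf. lra. }
  pose (S0 := fun j => M j + N j).
  pose (P := fun j => (1 - lam) * (M j + N j) + lam * al (j+1)%Z * N j + lam * Gm j * M j).
  pose (G := fun j => lam * Bt j * M j).
  pose (H := fun j => lam * Dl (j+1)%Z * N j).
  assert (Mnn : forall j, 0 <= M j) by (intros; apply Rabs_pos).
  assert (Nnn : forall j, 0 <= N j) by (intros; apply Rabs_pos).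
  assert (SUM : forall j, P j + G j + H j = S0 j).
  { intros j. unfold P, G, H, S0.
    destruct (CF j) as [_ [_ [_ [_ [_ E1]]]]]. destruct (CF (j+1)%Z) as [_ [_ [_ [_ [E2 _]]]]].
    transitivity ((1 - lam) * (M j + N j) + lam * (Bt j + Gm j) * M j + lam * (al (j+1)%Z + Dl (j+1)%Z) * N j);
      [ring|]. rewrite E1, E2. ring. }
  assert (Pnn : forall j, 0 <= P j).
  { intros j; unfold P; destruct (CF j) as [_ [_ [C3 _]]]; destruct (CF (j+1)%Z) as [C1 _].
    assert (0 <= lam * al (j+1)%Z * N j) by (apply Rmult_le_pos; [apply Rmult_le_pos|]; try lra; auto).
    assert (0 <= lam * Gm j * M j) by (apply Rmult_le_pos; [apply Rmult_le_pos|]; try lra; auto).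
    assert (0 <= (1 - lam) * (M j + N j)) by (apply Rmult_le_pos; [lra| specialize (Mnn j); specialize (Nnn j); lra]).
    lra. }
  assert (Gnn : forall j, 0 <= G j).
  { intros j; unfold G; destruct (CF j) as [_ [C2 _]]. apply Rmult_le_pos; [apply Rmult_le_pos|]; try lra; auto. }
  assert (Hnn : forall j, 0 <= H j).
  { intros j; unfold H; destruct (CF (j+1)%Z) as [_ [_ [_ [C4 _]]]]. apply Rmult_le_pos; [apply Rmult_le_pos|]; try lra; auto. }
  assert (SM : summableZ M) by (apply (summable_le (mu n)); [intros; unfold M; cbv beta; rewrite Rabs_Rabsolu; lra | auto]).
  assert (SN : summableZ N) by (apply (summable_le (nu n)); [intros; unfold N; cbv beta; rewrite Rabs_Rabsolu; lra | auto]).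
  assert (SS : summableZ S0) by (apply (summable_plus M N SM SN)).
  assert (Sdom : forall f : Z -> R, (forall j, 0 <= f j <= S0 j) -> summableZ f).
  { intros f Hf. apply (summable_le S0); auto. intros j. specialize (Hf j).
    rewrite !Rabs_pos_eq; lra. }
  assert (SP : summableZ P).
  { apply Sdom; intros j; specialize (SUM j); specialize (Pnn j); specialize (Gnn j); specialize (Hnn j); lra. }
  assert (SG : summableZ G).
  { apply Sdom; intros j; specialize (SUM j); specialize (Pnn j); specialize (Gnn j); specialize (Hnn j); lra. }
  assert (SH : summableZ H).
  { apply Sdom; intros j; specialize (SUM j); specialize (Pnn j); specialize (Gnn j); specialize (Hnn j); lra. }
  pose (G1 := fun j => G (j + 1)%Z).
  pose (H1 := fun j => H (j - 1)%Z).
  assert (EH : (fun j => H1 (j + 1)%Z) = H).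
  { apply functional_extensionality; intros j; unfold H1; f_equal; lia. }
  assert (SG1 : summableZ G1) by (apply (proj1 (shift_summable G)); auto).
  assert (SH1 : summableZ H1) by (apply (proj2 (shift_summable H1)); rewrite EH; auto).
  assert (eG : sumZ G1 = sumZ G) by (apply shift_sum; auto).
  assert (eH : sumZ H1 = sumZ H) by (rewrite <- (shift_sum H1 SH1), EH; reflexivity).
  destruct (summable_plus P G1 SP SG1) as [SPG ePG].
  destruct (summable_plus _ H1 SPG SH1) as [ST eT].
  pose (T := fun j => P j + G1 j + H1 j).
  assert (Tb : forall j, Rabs (mu (S n) j) + Rabs (nu (S n) j) <= T j).
  { intros j. unfold T, P, G1, H1, G, H. specialize (B1 j). specialize (B2 j).
    replace (j - 1 + 1)%Z with j by lia. lra. }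
  assert (Tdom : forall f : Z -> R, (forall j, Rabs (f j) <= T j) -> summableZ f).
  { intros f Hf. apply (summable_le T); auto. intros j. specialize (Hf j).
    rewrite (Rabs_pos_eq (T j)); auto. pose proof (Rabs_pos (f j)). lra. }
  split; [|split].
  - apply Tdom. intros j. specialize (Tb j). pose proof (Rabs_pos (nu (S n) j)). lra.
  - apply Tdom. intros j. specialize (Tb j). pose proof (Rabs_pos (mu (S n) j)). lra.
  - assert (SL : summableZ (fun j => Rabs (mu (S n) j) + Rabs (nu (S n) j))).
    { apply Tdom. intros j. specialize (Tb j).
      pose proof (Rabs_pos (mu (S n) j)). pose proof (Rabs_pos (nu (S n) j)).
      rewrite Rabs_pos_eq; lra. }
    eapply Rle_trans. apply (sumZ_le _ T Tb SL ST).
    change (sumZ T <= sumZ S0). unfold T. rewrite eT, ePG, eG, eH.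
    destruct (summable_plus P G SP SG) as [SPG' ePG'].
    destruct (summable_plus _ H SPG' SH) as [_ eT'].
    rewrite <- ePG', <- eT'.
    replace (fun j => P j + G j + H j) with S0 by (apply functional_extensionality; intros; rewrite SUM; auto).
    lra.
Qed.
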